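(* For every $n\ge1$, the bijection $B_0$ from signed forests of rooted trees on $\{1,\dots,n\}$ to $C(n+1)$ is compatible with the actions of $\mathfrak{S}_{n+1}$: for every $\sigma\in\mathfrak{S}_{n+1}$ and every signed forest $\varepsilon F$, $B_0(\sigma\cdot(\varepsilon F))=\sigma\cdot B_0(\varepsilon F)$.
   Context: A shrub $P$ on a finite set $I$ is a set $E$ of edges with a height function $h_P:I\to\mathbb{N}$ satisfying: edges join vertices whose heights differ by $1$; every vertex of positive height covers some vertex ($j$ covers $i$ if $\{i,j\}\in E$ and $h(j)=h(i)+1$); no four distinct $a,b,c,d$ with $a$ covering $b,c$, $c$ covering $d$, $\{b,d\}\notin E$; no five distinct $a,b,c,d,e$ with $a$ covering $c,d$, $b$ covering $d,e$, $\{a,e\},\{b,c\}\notin E$. Forests of rooted trees are the shrubs (height = distance to root) in which no vertex covers two distinct vertices. Each shrub $P$ on $\{1,\dots,n\}$ has a fraction $f_P\in\mathbb{Q}(u_1,\dots,u_n)$, its image under the operad morphism $\operatorname{Arb}\to\operatorname{Mould}$ determined by $[2\triangleleft1]\mapsto1/(u_1(u_1+u_2))$, $[1][2]\mapsto1/(u_1u_2)$ (for a forest, $f_F=\prod_j 1/\sum_{k\in F_j}u_k$ where $F_j$ is the subtree rooted at $j$). $\mathfrak{S}_{n+1}$ (permutations of $\{0,\dots,n\}$) acts on $\mathbb{Q}(u_1,\dots,u_n)$ by setting $u_0=-(u_1+\dots+u_n)$ and permuting $u_0,\dots,u_n$. On signed shrubs $\varepsilon P$ ($\varepsilon=\pm1$)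 the anticyclic action is $\sigma\cdot(\varepsilon P)=\varepsilon'P'$ where $\varepsilon'f_{P'}=\sigma\cdot(\varepsilon f_P)$ (well defined since $\varepsilon P\mapsto\varepsilon f_P$ is injective with $\mathfrak{S}_{n+1}$-stable image); it maps signed forests to signed forests. $C(n+1)$ is the set of signed rooted trees $\varepsilon(T,r)$ on $\{0,1,\dots,n\}$ modulo the relation $(T,r)=-(T,r')$ whenever $r'$ is adjacent to $r$ in $T$; $\mathfrak{S}_{n+1}$ acts on it by relabelling vertices. $B_0(\varepsilon F)=\varepsilon B_+(0,F)$, where $B_+(0,F)$ is the tree rooted at a new vertex $0$ obtained by joining $0$ to the roots of the trees of $F$. *)

(* Defs.v *)
From HB Require Import structures.
From mathcomp Require Import all_boot all_order all_algebra all_fingroup.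
From mathcomp Require Import generic_quotient fraction.
From mathcomp Require Import mpoly.
From Stdlib Require Import Relations.Relation_Operators.

Set Implicit Arguments.
Unset Strict Implicit.
Unset Printing Implicit Defensive.

Import GRing.Theory.
Local Open Scope ring_scope.
Local Open Scope quotient_scope.

(* Vertices.  The vertex set {1,...,n} is encoded by 'I_n: i : 'I_n     *)
(* stands for the vertex i+1.  The vertex set {0,...,n} is 'I_n.+1,   *)
(* and vertex i+1 of {1,...,n} is [vtx i] = lift ord0 i.               *)
Definition vtx (n : nat) (i : 'I_n) : 'I_n.+1 := lift ord0 i.

(* Forests of rooted trees on {1..n}: a parent map (None = root), with  *)
(* no cycles, i.e. iterating the parent map from any vertex reaches     *)
(* "beyond a root" (None) after at most n steps.                        *)
Definition forest (n : nat) := {ffun 'I_n -> option 'I_n}.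

Definition fstep (n : nat) (F : forest n) (x : option 'I_n) : option 'I_n :=
  if x is Some v then F v else None.

Definition is_forest (n : nat) (F : forest n) : Prop :=
  forall v : 'I_n, iter n (fstep F) (Some v) = None.

Definition in_subtree (n : nat) (F : forest n) (j k : 'I_n) : bool :=
  [exists m : 'I_n.+1, iter m (fstep F) (Some k) == Some j].

(* The field Q(u_1,...,u_n): fractions of {mpoly rat[n]}; the variable  *)
(* u_{i+1} is 'X_i for i : 'I_n.                                       *)
Definition ratfun (n : nat) := {fraction {mpoly rat[n]}}.
Definition tofracP (n : nat) (p : {mpoly rat[n]}) : ratfun n := @FracField.tofrac _ p.

Definition fF (n : nat) (F : forest n) : ratfun n :=
  \prod_(j < n) (tofracP (\sum_(k < n | in_subtree F j k) 'X_k))^-1.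

Definition sgnF (n : nat) (e : bool) : ratfun n := (-1) ^+ e.

Definition uvar (n : nat) (j : 'I_n.+1) : {mpoly rat[n]} :=
  if unlift ord0 j is Some i then 'X_i else - \sum_(i < n) 'X_i.

Definition poly_act (n : nat) (s : 'S_n.+1) (p : {mpoly rat[n]}) : {mpoly rat[n]} :=
  p \mPo [tuple uvar (s (vtx i)) | i < n].

(* extended to Q(u_1..u_n) by acting on numerator and denominator of a
   representative (independent of the representative) *)
Definition frac_act (n : nat) (s : 'S_n.+1) (f : ratfun n) : ratfun n :=
  tofracP (poly_act s (repr f).1) / tofracP (poly_act s (repr f).2).

(* Rooted trees on {0..n}: a parent map p together with its root r:     *)
(* p r = r, and every vertex reaches r by iterating p (at most n steps). *)
(* Signed rooted trees: (sign, parent map, root), sign true = minus.    *)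
Definition rtree (n : nat) := {ffun 'I_n.+1 -> 'I_n.+1}.

Definition is_rtree (n : nat) (p : rtree n) (r : 'I_n.+1) : bool :=
  (p r == r) && [forall v, iter n p v == r].

Definition srtree (n : nat) := (bool * rtree n * 'I_n.+1)%type.

(* underlying (unrooted) tree: its edge set *)
Definition redges (n : nat) (p : rtree n) (r : 'I_n.+1) : {set {set 'I_n.+1}} :=
  [set [set v; p v] | v in [set v | v != r]].

(* elementary relation: (T,r) = -(T,r') whenever r' is adjacent to r in T *)
Definition reroot_step (n : nat) (x y : srtree n) : Prop :=
  let: (e, p, r) := x in
  let: (e', p', r') := y in
  [/\ is_rtree p r, is_rtree p' r', redges p r = redges p' r',
      (r != r') && ([set r; r'] \in redges p r) & e' = ~~ e].

(* equality in C(n+1): the equivalence relation generated by reroot_step *)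
Definition Ceq (n : nat) : srtree n -> srtree n -> Prop :=
  clos_refl_sym_trans (srtree n) (@reroot_step n).

Definition tree_act (n : nat) (s : 'S_n.+1) (x : srtree n) : srtree n :=
  let: (e, p, r) := x in (e, [ffun v => s (p ((s^-1)%g v))], s r).

(* B_0(eps F) = eps B_+(0, F): new root 0 joined to the roots of F *)
Definition B0 (n : nat) (e : bool) (F : forest n) : srtree n :=
  (e, [ffun v : 'I_n.+1 =>
         if unlift ord0 v is Some i then
           (if F i is Some j then vtx j else ord0)
         else ord0], ord0).

(* Main.v *)
Require Import Defs.
From HB Require Import structures.
From mathcomp Require Import all_boot all_order all_algebra all_fingroup.
From mathcomp Require Import generic_quotient fraction.
From mathcomp Require Import mpoly.
From Stdlib Require Import Relations.Relation_Operators.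

Module Aux1.

Set Implicit Arguments.
Unset Strict Implicit.
Unset Printing Implicit Defensive.
Import GRing.Theory.
Local Open Scope ring_scope.

Section PolyAct.
Variable n : nat.

Lemma poly_actE (s : 'S_n.+1) p :
  poly_act s p = p \mPo [tuple uvar (s (vtx i)) | i < n].
Proof. by []. Qed.

Lemma poly_actX (s : 'S_n.+1) (i : 'I_n) : poly_act s 'X_i = uvar (s (vtx i)).
Proof. by rewrite poly_actE comp_mpolyXU -tnth_nth tnth_map tnth_ord_tuple. Qed.

Lemma uvar_vtx (i : 'I_n) : uvar (vtx i) = 'X_i.
Proof. by rewrite /uvar /vtx liftK. Qed.

Lemma uvar_lift (i : 'I_n) : uvar (lift ord0 i) = 'X_i.
Proof. exact: uvar_vtx. Qed.

Lemma uvar0 : uvar (ord0 : 'I_n.+1) = - \sum_(i < n) 'X_i.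
Proof. by rewrite /uvar unlift_none. Qed.

Lemma sum_uvar : \sum_(j < n.+1) uvar j = 0.
Proof.
rewrite big_ord_recl uvar0 addrC; apply/eqP; rewrite subr_eq0; apply/eqP.
by apply: eq_bigr => i _; exact: uvar_lift.
Qed.

Lemma sum_uvar_perm (s : 'S_n.+1) : \sum_(j < n.+1) uvar (s j) = 0.
Proof. by rewrite -[RHS]sum_uvar [in RHS](reindex_inj (@perm_inj _ s)). Qed.

Lemma poly_act0 (s : 'S_n.+1) : poly_act s 0 = 0.
Proof. exact: raddf0. Qed.
Lemma poly_actN (s : 'S_n.+1) p : poly_act s (- p) = - poly_act s p.
Proof. exact: raddfN. Qed.
Lemma poly_actD (s : 'S_n.+1) p q : poly_act s (p + q) = poly_act s p + poly_act s q.
Proof. exact: raddfD. Qed.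
Lemma poly_actM (s : 'S_n.+1) p q : poly_act s (p * q) = poly_act s p * poly_act s q.
Proof. exact: rmorphM. Qed.
Lemma poly_act_sum (s : 'S_n.+1) I (r : seq I) (P : pred I) (F : I -> {mpoly rat[n]}) :
  poly_act s (\sum_(i <- r | P i) F i) = \sum_(i <- r | P i) poly_act s (F i).
Proof. exact: raddf_sum. Qed.
Lemma poly_act_prod (s : 'S_n.+1) I (r : seq I) (P : pred I) (F : I -> {mpoly rat[n]}) :
  poly_act s (\prod_(i <- r | P i) F i) = \prod_(i <- r | P i) poly_act s (F i).
Proof. exact: rmorph_prod. Qed.
Lemma poly_act_sign (s : 'S_n.+1) (e : bool) : poly_act s ((-1) ^+ e) = (-1) ^+ e.
Proof. by rewrite /poly_act rmorph_sign. Qed.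

Lemma poly_act_uvar (s : 'S_n.+1) j : poly_act s (uvar j) = uvar (s j).
Proof.
case: (unliftP ord0 j) => [i ->|->].
  by rewrite uvar_lift poly_actX.
rewrite uvar0 poly_actN poly_act_sum.
under eq_bigr => i _ do rewrite poly_actX.
have := sum_uvar_perm s; rewrite big_ord_recl => /eqP.
by rewrite addrC addr_eq0 /vtx => /eqP ->; rewrite opprK.
Qed.

Lemma comp_comp k (p : {mpoly rat[n]}) (lq : n.-tuple {mpoly rat[k]})
   (lr : k.-tuple {mpoly rat[k]}) :
  (p \mPo lq) \mPo lr = p \mPo [tuple (tnth lq i \mPo lr) | i < n].
Proof.
rewrite [p \mPo lq]comp_mpolyEX [RHS]comp_mpolyEX raddf_sum; apply: eq_bigr => m _.
rewrite /= comp_mpolyZ; congr (_ *: _).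
rewrite !comp_mpolyX rmorph_prod; apply: eq_bigr => i _.
by rewrite rmorphXn tnth_map tnth_ord_tuple.
Qed.

Lemma poly_act_comp (s t : 'S_n.+1) p :
  poly_act t (poly_act s p) = poly_act (s * t)%g p.
Proof.
rewrite !poly_actE comp_comp; congr (_ \mPo _).
apply: eq_from_tnth => i; rewrite !tnth_map !tnth_ord_tuple.
by rewrite -poly_actE poly_act_uvar permM.
Qed.

Lemma poly_act1 p : poly_act (1%g : 'S_n.+1) p = p.
Proof.
rewrite poly_actE -[RHS]comp_mpoly_id; congr (_ \mPo _).
apply: eq_from_tnth => i; rewrite !tnth_map !tnth_ord_tuple perm1 uvar_vtx //.
Qed.

Lemma poly_act_inj (s : 'S_n.+1) : injective (poly_act s).
Proof.
move=> p q h; rewrite -(poly_act1 p) -(poly_act1 q) -(mulgV s).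
by rewrite -!poly_act_comp h.
Qed.

End PolyAct.

End Aux1.
Import Aux1.

Module Aux2.
Set Implicit Arguments.
Unset Strict Implicit.
Unset Printing Implicit Defensive.
Import GRing.Theory.
Local Open Scope ring_scope.
Local Open Scope quotient_scope.

Section Frac.
Variable R : idomainType.

Lemma pi_frac (x : {ratio R}) :
  (\pi_({fraction R}) x : {fraction R}) * FracField.tofrac (\d_x) = FracField.tofrac (\n_x).
Proof.
unlock FracField.tofrac.
rewrite -[_ * _]/(FracField.mul _ _).
rewrite !piE; apply/eqmodP; rewrite /= FracField.equivfE /FracField.mulf.
have d0 := denom_ratioP x.
rewrite !numden_Ratio ?mulr1 ?oner_neq0 ?mulf_neq0 ?oner_neq0 //.
by rewrite mulrC.
Qed.
End Frac.

Section FracAct.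
Variable n : nat.

Lemma tofracP_inj : injective (@tofracP n).
Proof. by move=> a b /eqP; rewrite /tofracP tofrac_eq => /eqP. Qed.

Lemma tofracPM (a b : {mpoly rat[n]}) : tofracP (a * b) = tofracP a * tofracP b.
Proof. exact: rmorphM. Qed.

Lemma tofracP_eq0 (a : {mpoly rat[n]}) : (tofracP a == 0) = (a == 0).
Proof. exact: tofrac_eq0. Qed.

Lemma frac_act_div (s : 'S_n.+1) a b : b != 0 ->
  frac_act s (tofracP a / tofracP b) =
  tofracP (poly_act s a) / tofracP (poly_act s b).
Proof.
move=> b0; rewrite /frac_act.
set f := tofracP a / tofracP b.
have hx := pi_frac (repr f); rewrite reprK in hx.
have x0 := denom_ratioP (repr f).
move: hx x0; case: (repr f) => [[x1 x2] /= _] hx x0.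
have tb0 : tofracP b != 0 by rewrite tofracP_eq0.
have tx0 : tofracP x2 != 0 by rewrite tofracP_eq0.
have e1 : a * x2 = x1 * b.
  apply: tofracP_inj; rewrite !tofracPM.
  transitivity (f * tofracP x2 * tofracP b).
    rewrite /f. rewrite mulrAC. rewrite divfK. done. exact: tb0.
  congr (_ * _). exact: hx.
have fa0 : poly_act s x2 != 0.
  by apply: contra x0 => /eqP h; apply/eqP; apply: (@poly_act_inj n s); rewrite h poly_act0.
have fb0 : poly_act s b != 0.
  by apply: contra b0 => /eqP h; apply/eqP; apply: (@poly_act_inj n s); rewrite h poly_act0.
apply/eqP; rewrite eqr_div ?tofracP_eq0 // -!tofracPM -!poly_actM.
by rewrite e1.
Qed.

End FracAct.

End Aux2.
Import Aux2.

Module Aux3.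
Set Implicit Arguments.
Unset Strict Implicit.
Unset Printing Implicit Defensive.
Import GRing.Theory.
Local Open Scope ring_scope.

Lemma reach_bound (T : finType) (f : T -> T) x y m :
  iter m f x = y -> exists2 m', (m' < #|T|)%N & iter m' f x = y.
Proof.
move=> h; have hc : fconnect f x y by rewrite -h fconnect_iter.
exists (findex f x y); last exact: iter_findex.
apply: leq_trans (findex_max hc) _.
by rewrite -size_orbit -(card_uniqP (orbit_uniq f x)) max_card.
Qed.

Lemma iter_fix (T : Type) (f : T -> T) r m : f r = r -> iter m f r = r.
Proof. by move=> fr; elim: m => //= m ->. Qed.

Lemma iter_closed (T : Type) (f : T -> T) (X : pred T) x i m :
  (forall v, X v -> X (f v)) -> X (iter i f x) -> (i <= m)%N -> X (iter m f x).
Proof.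
move=> cl hi /subnK <-; elim: (m - i)%N => [|d IH] //.
by rewrite addSn; apply: cl.
Qed.

Lemma iter_agree (T : Type) (f g : T -> T) (X : pred T) x m :
  (forall v, ~~ X v -> f v = g v) ->
  (forall i, (i < m)%N -> ~~ X (iter i f x)) -> iter m f x = iter m g x.
Proof.
move=> fg; elim: m => [|m IH] h //=.
have -> : iter m f x = iter m g x by apply: IH => i lt; apply: h; rewrite ltnS ltnW.
by rewrite -fg // -IH => [|i lt]; [apply: h | apply: h; rewrite ltnS ltnW].
Qed.

Section Trees.
Variable n : nat.
Implicit Types (p : rtree n) (r : 'I_n.+1).

Lemma is_rtreeP p r :
  reflect (p r = r /\ forall v, exists m, iter m p v = r) (is_rtree p r).
Proof.
apply: (iffP andP) => [[/eqP pr /forallP h]|[pr h]].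
  by split=> // v; exists n; apply/eqP.
split; first exact/eqP.
apply/forallP => v; have [m hm] := h v.
have [m' lt hm'] := reach_bound hm.
rewrite card_ord ltnS in lt.
by rewrite -[X in iter X](subnK lt) iterD hm' iter_fix.
Qed.

Lemma rtree_iter_big p r v m : is_rtree p r -> (n <= m)%N -> iter m p v = r.
Proof.
move=> /andP [/eqP pr /forallP h] le.
by rewrite -(subnK le) iterD (eqP (h v)) iter_fix.
Qed.

Definition descb p j k := [exists m : 'I_n.+1, iter m p k == j].

Lemma descbP p r j k : is_rtree p r -> j != r ->
  reflect (exists m, iter m p k = j) (descb p j k).
Proof.
move=> hr jr; apply: (iffP existsP) => [[m /eqP h]|[m h]]; first by exists m.
have [le|lt] := leqP n m.
  by move: jr; rewrite -h (rtree_iter_big _ hr le) eqxx.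
by exists (Ordinal (leq_trans lt (leqnSn n))); rewrite /= h.
Qed.

Definition U p j : {mpoly rat[n]} := \sum_(k | descb p j k) uvar k.
Definition Den p r : {mpoly rat[n]} := \prod_(j | j != r) U p j.
Definition reroot p r c : rtree n :=
  [ffun v => if (v == r) || (v == c) then c else p v].

Section Reroot.
Variables (p : rtree n) (r c : 'I_n.+1).
Hypotheses (hr : is_rtree p r) (pc : p c = r) (cr : c != r).
Let p' := reroot p r c.
Let X := [pred v : 'I_n.+1 | (v == r) || (v == c)].

Let pr : p r = r. Proof. by case/andP: hr => /eqP. Qed.
Let clp v : X v -> X (p v).
Proof. by rewrite !inE => /orP [] /eqP ->; rewrite ?pr ?pc eqxx. Qed.
Let clp' v : X v -> X (p' v).
Proof. by rewrite /p' /reroot ffunE !inE => ->; rewrite eqxx orbT. Qed.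
Let agree v : ~~ X v -> p v = p' v.
Proof. by rewrite /p' /reroot ffunE !inE => /negbTE ->. Qed.
Let p'r : p' r = c. Proof. by rewrite /p' /reroot ffunE eqxx. Qed.
Let p'c : p' c = c. Proof. by rewrite /p' /reroot ffunE eqxx orbT. Qed.

Let entry k : exists t, X (iter t p k) /\ forall i, (i < t)%N -> ~~ X (iter i p k).
Proof.
have ex : exists t, X (iter t p k).
  by exists n; rewrite (rtree_iter_big _ hr (leqnn n)) !inE eqxx.
exists (ex_minn ex); case: ex_minnP => t ht hmin; split => // i lt.
by apply/negP => hi; move: (hmin i hi); rewrite leqNgt lt.
Qed.

Let entry' k t : (forall i, (i < t)%N -> ~~ X (iter i p k)) ->
  iter t p' k = iter t p k.
Proof. by move=> h; apply/esym/(iter_agree agree). Qed.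

Lemma reroot_rtree : is_rtree p' c.
Proof.
apply/is_rtreeP; split => // v.
have [t [ht hmin]] := entry v.
have e := entry' hmin.
move: ht; rewrite !inE => /orP [] /eqP h.
  by exists t.+1; rewrite iterS e h.
by exists t; rewrite e h.
Qed.

Let hr' := reroot_rtree.

Lemma reroot_descb j k : ~~ X j -> descb p j k = descb p' j k.
Proof.
rewrite !inE negb_or => /andP [jr jc].
apply/(descbP k hr jr)/(descbP k hr' jc) => [[m h]|[m h]]; exists m.
  rewrite -(iter_agree (X := X) agree) // => i lt; apply/negP => hi.
  have := iter_closed clp hi (ltnW lt); rewrite h !inE.
  by rewrite (negbTE jr) (negbTE jc).
rewrite -(iter_agree (f := p') (g := p) (X := X)) // => [v hv|i lt]; first by rewrite agree.
apply/negP => hi.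
have := iter_closed clp' hi (ltnW lt); rewrite h !inE.
by rewrite (negbTE jr) (negbTE jc).
Qed.

Lemma reroot_descb_r k : descb p' r k = ~~ descb p c k.
Proof.
have rc : r != c by rewrite eq_sym.
have [t [ht hmin]] := entry k.
have e := entry' hmin.
apply/(descbP k hr' rc)/negP.
  move=> [m hm] /(descbP k hr cr) [m' hm'].
  move: ht; rewrite !inE => /orP [] /eqP h.
    (* entry at r: p-path never reaches c *)
    have [lt|le] := ltnP m' t.
      by move: (hmin _ lt); rewrite hm' !inE eqxx orbT.
    move: hm'; rewrite -(subnK le) iterD h iter_fix // => /eqP.
    by rewrite eq_sym (negbTE cr).
  have [lt|le] := ltnP m t.
    move: (hmin _ lt); rewrite -(entry' (t := m)) => [|i li]; last first.
      by apply: hmin; apply: ltn_trans lt.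
    by rewrite hm !inE eqxx.
  move: hm; rewrite -(subnK le) iterD e h iter_fix // => /eqP.
  by rewrite (negbTE cr).
move=> hn.
move: ht; rewrite !inE => /orP [] /eqP h.
  by exists t; rewrite e h.
by case: hn; apply/(descbP k hr cr); exists t.
Qed.

Lemma reroot_redges : redges p r = redges p' c.
Proof.
apply/setP => E; apply/imsetP/imsetP => [[v]|[v]]; rewrite !inE => hv ->.
  have [vc|vc] := eqVneq v c.
    exists r; first by rewrite inE eq_sym.
    by rewrite vc pc p'r setUC.
  exists v; first by rewrite inE.
  by rewrite agree // !inE negb_or hv.
have [vr|vr] := eqVneq v r.
  by exists c; rewrite ?inE // vr pc p'r setUC.
by exists v; rewrite ?inE // agree // !inE negb_or vr.
Qed.

Lemma reroot_edge : [set r; c] \in redges p r.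
Proof.
by apply/imsetP; exists c; rewrite ?inE // pc setUC.
Qed.

Lemma reroot_Den : Den p' c = - Den p r.
Proof.
have rc : r != c by rewrite eq_sym.
rewrite /Den (bigD1 r rc) /= [in RHS](bigD1 c cr) /=.
rewrite -mulNr; congr (_ * _).
  rewrite /U; apply/eqP; rewrite -addr_eq0.
  rewrite (eq_bigl (fun k => ~~ descb p c k)); last by move=> k; rewrite reroot_descb_r.
  have := sum_uvar n; rewrite (bigID (descb p c)) /= => h.
  by rewrite -[X in _ == X]h addrC.
apply: eq_big => j.
  by rewrite andbC.
rewrite /U => /andP [h1 h2]; apply: eq_bigl => k.
by rewrite reroot_descb // !inE negb_or h1 h2.
Qed.

End Reroot.

Lemma reroot_agree p r c v : v != r -> v != c -> reroot p r c v = p v.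
Proof. by rewrite /reroot ffunE => /negbTE -> /negbTE ->. Qed.

Lemma reroot_many d : forall e p r a, is_rtree p r -> iter d p a = r ->
  exists e' p', [/\ is_rtree p' a, Ceq (e, p, r) (e', p', a) &
     (-1) ^+ e' * Den p' a = (-1) ^+ e * Den p r].
Proof.
elim: d => [|d IH] e p r a hr hd.
  move: hd => /= ->; exists e, p; split => //; exact: rst_refl.
set c := iter d p a.
have pr : p r = r by case/andP: hr => /eqP.
have pc : p c = r by rewrite -hd iterS.
have [cr|cr] := eqVneq c r; first exact: IH.
have hr' := reroot_rtree c hr.
have hdc : iter d (reroot p r c) a = c.
  rewrite /c -(iter_agree (f := p) (g := reroot p r c) (X := [pred v | (v == r) || (v == c)])) //.
    by move=> v; rewrite !inE negb_or => /andP [h1 h2]; rewrite reroot_agree.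
  move=> i lt; apply/negP; rewrite !inE => hi.
  have hi1 : iter i.+1 p a = r by rewrite iterS; case/orP: hi => /eqP ->.
  have h : pred1 r (iter d p a).
    apply: (iter_closed (i := i.+1)) => //; first by move=> v /eqP ->; rewrite /= pr.
    by apply/eqP; exact: hi1.
  by move: cr; rewrite /c (eqP h) eqxx.
have [e' [p'' [h1 h2 h3]]] := IH (~~ e) _ _ _ hr' hdc.
exists e', p''; split => //.
  apply: rst_trans h2; apply: rst_step.
  split => //; first exact: reroot_redges.
  by rewrite eq_sym cr; apply: reroot_edge.
by rewrite h3 (reroot_Den hr pc cr) signrN mulrN mulNr opprK.
Qed.

End Trees.

End Aux3.
Import Aux3.

Module Aux4.
Set Implicit Arguments.
Unset Strict Implicit.
Unset Printing Implicit Defensive.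
Import GRing.Theory.
Local Open Scope ring_scope.

Section Act.
Variables (n : nat) (s : 'S_n.+1).
Implicit Types (p : rtree n).

Definition actp p : rtree n := [ffun v => s (p ((s^-1)%g v))].

Lemma tree_actE e p r : tree_act s (e, p, r) = (e, actp p, s r).
Proof. by []. Qed.

Lemma iter_actp p m v : iter m (actp p) v = s (iter m p ((s^-1)%g v)).
Proof.
elim: m => [|m IH] /=; first by rewrite permKV.
by rewrite IH /actp ffunE permK.
Qed.

Lemma actp_rtree p r : is_rtree p r -> is_rtree (actp p) (s r).
Proof.
case/andP => /eqP pr /forallP h; apply/andP; split.
  by rewrite /actp ffunE permK pr.
by apply/forallP => v; rewrite iter_actp (eqP (h _)).
Qed.

Lemma descb_actp p j k : descb (actp p) (s j) (s k) = descb p j k.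
Proof.
apply: eq_existsb => m; rewrite iter_actp permK.
by rewrite (inj_eq (@perm_inj _ s)).
Qed.

Lemma U_actp p j : U (actp p) (s j) = poly_act s (U p j).
Proof.
rewrite /U poly_act_sum (reindex_inj (@perm_inj _ s)) /=.
apply: eq_big => k; first by rewrite descb_actp.
by rewrite poly_act_uvar.
Qed.

Lemma Den_actp p r : Den (actp p) (s r) = poly_act s (Den p r).
Proof.
rewrite /Den poly_act_prod (reindex_inj (@perm_inj _ s)) /=.
apply: eq_big => j; first by rewrite (inj_eq (@perm_inj _ s)).
by rewrite U_actp.
Qed.

End Act.

Section B0.
Variable n : nat.

Definition hv (x : option 'I_n) : 'I_n.+1 := if x is Some i then vtx i else ord0.

Lemma lift0_neq (i : 'I_n) : (lift ord0 i == ord0 :> 'I_n.+1) = false.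
Proof. by rewrite eq_sym (negbTE (neq_lift _ _)). Qed.

Lemma hv_inj : injective hv.
Proof.
have nl (i : 'I_n) : (vtx i == ord0) = false by rewrite eq_sym (negbTE (neq_lift _ _)).
case=> [i|] [j|] //= h.
all: try by rewrite (lift_inj h).
all: try by move: h => /eqP; rewrite nl.
all: try by move: h => /esym /eqP; rewrite nl.
Qed.

Lemma hv_surj (v : 'I_n.+1) : exists x, v = hv x.
Proof. by case: (unliftP ord0 v) => [i ->|->]; [exists (Some i) | exists None]. Qed.

Definition compat (p : rtree n) (F : forest n) :=
  forall x, p (hv x) = hv (fstep F x).

Lemma iter_compat p F m x : compat p F ->
  iter m p (hv x) = hv (iter m (fstep F) x).
Proof. by move=> c; elim: m => //= m ->; rewrite c. Qed.

Lemma iter_fstep_None (F : forest n) m : iter m (fstep F) None = None.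
Proof. by elim: m => //= m ->. Qed.

Lemma compat_rtree p F : compat p F -> is_forest F <-> is_rtree p ord0.
Proof.
move=> c; split => [hF|hr].
  apply/andP; split; first by rewrite (c None).
  apply/forallP => v; have [x ->] := hv_surj v.
  rewrite (@iter_compat p F n x c); case: x => [i|]; first by rewrite hF.
  by rewrite iter_fstep_None.
move=> i; apply: hv_inj; case/andP: hr => _ /forallP /(_ (vtx i)) /eqP.
by rewrite (iter_compat _ (Some i) c).
Qed.

Lemma compat_descb p F i k : compat p F ->
  descb p (vtx i) (vtx k) = in_subtree F i k.
Proof.
move=> c; apply: eq_existsb => m.
by rewrite (iter_compat _ (Some k) c) -[vtx i]/(hv (Some i)) (inj_eq hv_inj).
Qed.

Lemma compat_descb0 p F i : compat p F -> descb p (vtx i) ord0 = false.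
Proof.
move=> c; apply/negbTE/existsP => [[m]].
rewrite -[ord0]/(hv None) (iter_compat _ None c) iter_fstep_None.
by rewrite -[vtx i]/(hv (Some i)) (inj_eq hv_inj).
Qed.

Definition DF (F : forest n) : {mpoly rat[n]} :=
  \prod_(i < n) \sum_(k < n | in_subtree F i k) 'X_k.

Lemma compat_Den p F : compat p F -> Den p ord0 = DF F.
Proof.
move=> c; rewrite /Den big_mkcond big_ord_recl /= mul1r /DF.
apply: eq_bigr => i _; rewrite /U.
rewrite big_mkcond big_ord_recl /= (compat_descb0 i c) add0r.
rewrite [RHS]big_mkcond; apply: eq_bigr => k _.
by rewrite -/(vtx k) (compat_descb _ _ c) uvar_lift.
Qed.

Definition B0p (F : forest n) : rtree n :=
  [ffun v : 'I_n.+1 =>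
         if unlift ord0 v is Some i then
           (if F i is Some j then vtx j else ord0)
         else ord0].

Lemma B0E e F : B0 e F = (e, B0p F, ord0).
Proof. by []. Qed.

Lemma B0p_compat F : compat (B0p F) F.
Proof.
case=> [i|] /=; rewrite /B0p ffunE ?unlift_none //.
by rewrite /vtx liftK; case: (F i).
Qed.

Definition toF (p : rtree n) : forest n := [ffun i => unlift ord0 (p (vtx i))].

Lemma toF_compat (p : rtree n) : p ord0 = ord0 -> compat p (toF p).
Proof.
move=> p0; case=> [i|] //=; rewrite /toF ffunE.
by case: (unliftP ord0 (p (vtx i))) => [j ->|->].
Qed.

Lemma toF_B0p (p : rtree n) : p ord0 = ord0 -> B0p (toF p) = p.
Proof.
move=> p0; apply/ffunP => v; have [x ->] := hv_surj v.
by rewrite (B0p_compat _ x) (toF_compat p0 x).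
Qed.

End B0.

End Aux4.
Import Aux4.

Module Aux5.
Set Implicit Arguments.
Unset Strict Implicit.
Unset Printing Implicit Defensive.
Import GRing.Theory Num.Theory.
Local Open Scope ring_scope.

Lemma bin_bound N (a : nat -> bool) : (\sum_(i < N) a i * 2 ^ i < 2 ^ N)%N.
Proof.
elim: N => [|N IH]; first by rewrite big_ord0.
rewrite big_ord_recr /= expnS mul2n -addnn.
apply: leq_trans (_ : 2 ^ N + a N * 2 ^ N <= _)%N.
  by rewrite ltn_add2r.
by rewrite leq_add2l; case: (a N); rewrite ?mul1n ?mul0n.
Qed.

Lemma bin_inj N (a b : nat -> bool) :
  (\sum_(i < N) a i * 2 ^ i = \sum_(i < N) b i * 2 ^ i)%N ->
  forall i, (i < N)%N -> a i = b i.
Proof.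
elim: N => [|N IH] // h i lti.
rewrite !big_ord_recr /= in h.
have e1 : a N = b N.
  have := congr1 (fun x => x %/ 2 ^ N)%N h.
  rewrite ![(_ + _ * _)%N]addnC !divnMDl ?expn_gt0 //.
  by rewrite !divn_small ?bin_bound // !addn0; case: (a N); case: (b N).
have e2 : (\sum_(i < N) a i * 2 ^ i = \sum_(i < N) b i * 2 ^ i)%N.
  by move: h; rewrite e1 => /addIn.
rewrite ltnS leq_eqVlt in lti; case/orP: lti => [/eqP ->//|]; exact: IH.
Qed.

Section Inj.
Variable n : nat.
Implicit Types (A B F : forest n).

Lemma set_bin (S T : {set 'I_n}) :
  (\sum_(k in S) 2 ^ k = \sum_(k in T) 2 ^ k)%N -> S = T.
Proof.
pose ch (X : {set 'I_n}) (j : nat) := [exists k : 'I_n, (k == j :> nat) && (k \in X)].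
have chE X (i : 'I_n) : ch X i = (i \in X).
  apply/existsP/idP => [[k /andP [/eqP /val_inj -> //]]|hi].
  by exists i; rewrite eqxx.
have sE (X : {set 'I_n}) : (\sum_(k in X) 2 ^ k = \sum_(i < n) ch X i * 2 ^ i)%N.
  rewrite big_mkcond; apply: eq_bigr => i _; rewrite chE.
  by case: (i \in X); rewrite ?mul1n ?mul0n.
rewrite !sE => h; apply/setP => i.
by rewrite -!chE (bin_inj h (ltn_ord i)).
Qed.

Definition xpt (S : {set 'I_n}) (m : 'I_n) (k : 'I_n) : rat :=
  if k == m then - ((\sum_(k' in S :\ m) 2 ^ k')%N)%:R else (2 ^ k)%N%:R.

Lemma xpt_sum (S T : {set 'I_n}) m : m \in S -> (exists k, k \in T) ->
  (\sum_(k in T) xpt S m k == 0) = (T == S).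
Proof.
move=> mS [k0 k0T].
have off X : m \notin X -> \sum_(k in X) xpt S m k = (\sum_(k in X) 2 ^ k)%N%:R.
  move=> mX; rewrite natr_sum; apply: eq_bigr => k kX; rewrite /xpt.
  by case: eqP => // km; move: mX; rewrite -km kX.
case: (boolP (m \in T)) => mT.
  rewrite (big_setD1 _ mT) /= off ?setD11 // {1}/xpt eqxx addrC subr_eq0 eqr_nat.
  apply/eqP/eqP => [h|->//].
  by rewrite -(setD1K mT) -(setD1K mS) (set_bin h).
rewrite off //; apply/idP/idP.
  rewrite pnatr_eq0 => /eqP h; move: h; rewrite (big_setD1 _ k0T) /=.
  by move/eqP; rewrite addn_eq0 expn_eq0.
by move/eqP => TS; move: mT; rewrite TS mS.
Qed.

Definition ST F (i : 'I_n) : {set 'I_n} := [set k | in_subtree F i k].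

Lemma iter_fstep_big F m k : is_forest F -> (n <= m)%N ->
  iter m (fstep F) (Some k) = None.
Proof.
move=> hF le; rewrite -(subnK le) iterD hF.
exact: iter_fstep_None.
Qed.

Lemma in_subtreeP F j k : is_forest F ->
  reflect (exists m, iter m (fstep F) (Some k) = Some j) (in_subtree F j k).
Proof.
move=> hF; apply: (iffP existsP) => [[m /eqP h]|[m h]]; first by exists m.
have [le|lt] := leqP n m; first by move: h; rewrite iter_fstep_big.
by exists (Ordinal (leq_trans lt (leqnSn n))); rewrite /= h.
Qed.

Lemma iter_fstep_mul F m c x : iter m (fstep F) (Some x) = Some x ->
  iter (c * m) (fstep F) (Some x) = Some x.
Proof. by move=> h; elim: c => // c IH; rewrite mulSn iterD IH h. Qed.

Lemma acyclic F m x : is_forest F -> iter m (fstep F) (Some x) = Some x -> m = 0%N.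
Proof.
move=> hF h; case: m h => // m h.
have := iter_fstep_mul n h; rewrite iter_fstep_big //.
by rewrite leq_pmulr.
Qed.

Lemma antisym F a b x y : is_forest F ->
  iter a (fstep F) (Some x) = Some y -> iter b (fstep F) (Some y) = Some x -> x = y.
Proof.
move=> hF ha hb.
have := acyclic hF (_ : iter (b + a) (fstep F) (Some x) = Some x).
rewrite iterD ha hb => /(_ erefl) /eqP; rewrite addn_eq0 => /andP [_ /eqP a0].
by move: ha; rewrite a0 => -[].
Qed.

Lemma ST_self F i : i \in ST F i.
Proof. by rewrite inE; apply/existsP; exists ord0. Qed.

Lemma ST_trans F i k : is_forest F -> k \in ST F i -> ST F k \subset ST F i.
Proof.
move=> hF; rewrite inE => /(in_subtreeP _ _ hF) [m hm].
apply/subsetP => l; rewrite !inE => /(in_subtreeP _ _ hF) [m' hm'].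
by apply/(in_subtreeP _ _ hF); exists (m + m')%N; rewrite iterD hm'.
Qed.

Lemma meval_L F j (x : 'I_n -> rat) :
  meval x (\sum_(k < n | in_subtree F j k) 'X_k) = \sum_(k in ST F j) x k.
Proof.
rewrite raddf_sum /=; apply: eq_big => [k|k _]; first by rewrite inE.
exact: mevalXU.
Qed.

Lemma meval_DF F (x : 'I_n -> rat) :
  meval x (DF F) = \prod_(j < n) \sum_(k in ST F j) x k.
Proof.
rewrite /DF rmorph_prod /=; apply: eq_bigr => j _; exact: meval_L.
Qed.

Lemma family A B (a b : bool) : is_forest A -> is_forest B ->
  (-1) ^+ a * DF B = (-1) ^+ b * DF A ->
  forall i, exists j, ST A i = ST B j.
Proof.
move=> hA hB h i.
case: (boolP [exists j, ST A i == ST B j]) => [/existsP [j /eqP e]|hn].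
  by exists j.
have := congr1 (meval (xpt (ST A i) i)) h.
rewrite !mevalM !meval_DF !rmorph_sign.
rewrite [in RHS](bigD1 i) //=.
have -> : \sum_(k in ST A i) xpt (ST A i) i k = 0.
  by apply/eqP; rewrite xpt_sum ?ST_self //; exists i; exact: ST_self.
rewrite mul0r mulr0 => /eqP; rewrite mulf_eq0 signr_eq0 /=.
move/prodf_eq0 => [j _].
rewrite xpt_sum ?ST_self //; last by exists j; exact: ST_self.
by move/eqP => e; move: hn; rewrite negb_exists => /forallP /(_ j); rewrite e eqxx.
Qed.

Lemma ST_eq A B (a b : bool) : is_forest A -> is_forest B ->
  (-1) ^+ a * DF B = (-1) ^+ b * DF A -> forall k, ST A k = ST B k.
Proof.
move=> hA hB h k.
have h' : (-1) ^+ b * DF A = (-1) ^+ a * DF B by [].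
have [j ej] := family hA hB h k.
have [j' ej'] := family hB hA (esym h) k.
apply/eqP; rewrite eqEsubset; apply/andP; split.
  rewrite ej'; apply: ST_trans => //; rewrite -ej'; exact: ST_self.
rewrite ej; apply: ST_trans => //; rewrite -ej; exact: ST_self.
Qed.

Lemma forest_eq_dir A B k p : is_forest A -> is_forest B ->
  (forall i, ST A i = ST B i) -> A k = Some p -> B k = Some p.
Proof.
move=> hA hB e hk.
have pk : k \in ST B p by rewrite -e inE; apply/(in_subtreeP _ _ hA); exists 1%N.
rewrite inE in pk.
case/(in_subtreeP _ _ hB): pk => [[|m] hm].
  by case: hm => pk; have := @acyclic A 1%N k hA; rewrite /= hk pk => /(_ erefl).
move: hm; rewrite iterSr /=.
case hBk: (B k) => [q|]; last by rewrite iter_fstep_None.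
move=> hm.
have qp : q \in ST A p by rewrite e inE; apply/(in_subtreeP _ _ hB); exists m.
have kq : k \in ST A q by rewrite e inE; apply/(in_subtreeP _ _ hB); exists 1%N; rewrite /= hBk.
rewrite inE in qp; rewrite inE in kq.
case/(in_subtreeP _ _ hA): qp => t1 h1.
case/(in_subtreeP _ _ hA): kq => [[|t2] h2].
  case: h2 => qk; move: hBk; rewrite -qk => hBk.
  by have := @acyclic B 1%N k hB; rewrite /= hBk => /(_ erefl).
move: h2; rewrite iterSr /= hk => h2.
by rewrite (antisym hA h2 h1).
Qed.

Lemma forest_eq A B : is_forest A -> is_forest B ->
  (forall i, ST A i = ST B i) -> A = B.
Proof.
move=> hA hB e; apply/ffunP => k.
case hAk: (A k) => [p|]; first by rewrite (forest_eq_dir hA hB e hAk).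
case hBk: (B k) => [q|] //.
by move: (forest_eq_dir hB hA (fun i => esym (e i)) hBk); rewrite hAk.
Qed.

Lemma DF_neq0 F : DF F != 0.
Proof.
apply/negP => /eqP h.
have := congr1 (meval (fun _ => 1)) h; rewrite meval_DF meval0 => /eqP.
rewrite prodf_seq_eq0 => /hasP [j _ /=].
rewrite sumr_const pnatr_eq0 => /eqP h0.
have : (0 < #|ST F j|)%N by apply/card_gt0P; exists j; exact: ST_self.
by rewrite h0.
Qed.

Lemma sgn_fF e F : sgnF n e * fF F = tofracP ((-1) ^+ e) / tofracP (DF F).
Proof.
rewrite /sgnF /fF /DF /tofracP rmorph_sign rmorph_prod /= prodfV //.
Qed.

Lemma sgn_inj (a b : bool) : (-1) ^+ a = (-1) ^+ b :> rat -> a = b.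
Proof. by case: a; case: b. Qed.

Lemma fF_inj A B a b : is_forest A -> is_forest B ->
  sgnF n a * fF A = sgnF n b * fF B -> a = b /\ A = B.
Proof.
move=> hA hB; rewrite !sgn_fF => /eqP.
rewrite eqr_div ?tofracP_eq0 ?DF_neq0 // -!tofracPM => /eqP /tofracP_inj h.
have e := forest_eq hA hB (ST_eq hA hB h).
split => //; move: h; rewrite e => /(mulIf (DF_neq0 B)) h.
apply: sgn_inj; have := congr1 (meval (fun _ => 0)) h.
by rewrite !rmorph_sign.
Qed.

End Inj.

End Aux5.
Import Aux5.

Import GRing.Theory.
Local Open Scope ring_scope.

Theorem mainTheorem19 (n : nat) (hn : (0 < n)%N) (s : 'S_n.+1)
    (e : bool) (F : forest n) (hF : is_forest F) :
  (exists (e' : bool) (F' : forest n),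
      is_forest F' /\ sgnF n e' * fF F' = frac_act s (sgnF n e * fF F)) /\
  (forall (e' : bool) (F' : forest n), is_forest F' ->
      sgnF n e' * fF F' = frac_act s (sgnF n e * fF F) ->
      Ceq (B0 e' F') (tree_act s (B0 e F))).
Proof.
have cP := B0p_compat F.
have hP : is_rtree (B0p F) ord0 by apply/(compat_rtree cP).
have hq := actp_rtree s hP.
have hreach : iter n (actp s (B0p F)) ord0 = s ord0.
  by case/andP: hq => _ /forallP /(_ ord0) /eqP.
have [e' [p' [h1 h2 h3]]] := reroot_many e hq hreach.
have p0 : p' ord0 = ord0 by case/andP: h1 => /eqP.
set F0 := toF p'.
have c0 : compat p' F0 := toF_compat p0.
have hF0 : is_forest F0 by apply/(compat_rtree c0).
have B0F0 : B0 e' F0 = (e', p', ord0) by rewrite B0E toF_B0p.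
have DF0 : Den p' ord0 = DF F0 := compat_Den c0.
have DFq : Den (actp s (B0p F)) (s ord0) = poly_act s (DF F).
  by rewrite Den_actp (compat_Den cP).
have PA0 : poly_act s (DF F) != 0.
  apply: contra (DF_neq0 F) => /eqP h; apply/eqP; apply: (@poly_act_inj n s).
  by rewrite h poly_act0.
have Heq : sgnF n e' * fF F0 = frac_act s (sgnF n e * fF F).
  rewrite !sgn_fF frac_act_div ?DF_neq0 // poly_act_sign.
  apply/eqP; rewrite eqr_div ?tofracP_eq0 ?DF_neq0 // -!tofracPM; apply/eqP.
  congr tofracP.
  rewrite -DF0 -DFq -[Den (actp s _) _](signrMK e) -h3 mulrCA signrMK //.
split; first by exists e', F0.
move=> e2 F2 hF2 heq.
have [-> ->] := fF_inj hF2 hF0 (etrans heq (esym Heq)).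
rewrite B0F0 B0E tree_actE; exact: rst_sym.
Qed.
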